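(* Let $((A_i,B_i))_{i\in\mathbb N}$ be a strictly increasing sequence of oriented separations of a connected locally finite graph $G$ whose underlying separations are tight, let $(A,B)=(\bigcup_iA_i,\bigcap_iB_i)$ be its limit, and let $(C,D)$ be an oriented separation of $G$ of finite order. If the sequence is non-exhaustive (i.e. $B\neq\emptyset$) and $(C,D)\le(A,B)$, then there is $I\in\mathbb N$ with $(C,D)\le(A_i,B_i)$ for all $i\ge I$.
   Context: A separation of $G$ is an unordered pair $\{A,B\}$ of subsets of $V(G)$ with $A\cup B=V(G)$ and no edge between $A\setminus B$ and $B\setminus A$; its order is $|A\cap B|$. Oriented separations are ordered by $(A,B)\le(C,D)$ iff $A\subseteq C$ and $B\supseteq D$. For $X\subseteq V(G)$, a component $K$ of $G-X$ is tight if $N_G(K)=X$; a separation $\{A,B\}$ is tight if both $A\setminus B$ and $B\setminus A$ contain the vertex set of a tight component of $G-(A\cap B)$. *)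

(* Defs.v *)
From Stdlib Require Import List Arith.

Definition vset (V : Type) := V -> Prop.

Section Graphs.
Variable V : Type.
Variable adj : V -> V -> Prop.

Definition simple_graph : Prop :=
  (forall x y, adj x y -> adj y x) /\ (forall x, ~ adj x x).

Definition finite_set (S : vset V) : Prop :=
  exists l : list V, forall x, S x -> In x l.

Definition locally_finite : Prop :=
  forall v, finite_set (fun w => adj v w).

Inductive reach_in (S : vset V) (x : V) : V -> Prop :=
| reach_refl : S x -> reach_in S x x
| reach_step : forall y z, reach_in S x y -> adj y z -> S z -> reach_in S x z.

Definition connected_graph : Prop :=
  forall x y, reach_in (fun _ => True) x y.

Definition subset (S T : vset V) : Prop := forall x, S x -> T x.
Definition set_eq (S T : vset V) : Prop := forall x, S x <-> T x.

Definition is_separation (A B : vset V) : Prop :=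
  (forall x, A x \/ B x) /\
  (forall x y, A x -> ~ B x -> B y -> ~ A y -> ~ adj x y).

Definition sep_order_finite (A B : vset V) : Prop :=
  finite_set (fun x => A x /\ B x).

Definition sep_le (A B C D : vset V) : Prop := subset A C /\ subset D B.

Definition sep_lt (A B C D : vset V) : Prop :=
  sep_le A B C D /\ ~ (set_eq A C /\ set_eq B D).

Definition component_of (X K : vset V) : Prop :=
  exists v, ~ X v /\ set_eq K (reach_in (fun y => ~ X y) v).

Definition nbhd (K : vset V) : vset V :=
  fun y => ~ K y /\ exists x, K x /\ adj x y.

Definition tight_component (X K : vset V) : Prop :=
  component_of X K /\ set_eq (nbhd K) X.

Definition tight_sep (A B : vset V) : Prop :=
  let X := fun x => A x /\ B x in
  (exists K, tight_component X K /\ subset K (fun x => A x /\ ~ B x)) /\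
  (exists K, tight_component X K /\ subset K (fun x => B x /\ ~ A x)).

End Graphs.

Arguments finite_set {V}.
Arguments subset {V}.
Arguments set_eq {V}.

(* Main.v *)
Require Import Defs.
From Stdlib Require Import List Arith.
From Stdlib Require Import Classical Lia.

Lemma side_lemma (V : Type) (adj : V -> V -> Prop) (P Q S : vset V) (x : V)
  (Hedge : forall x y, P x -> ~ Q x -> Q y -> ~ P y -> ~ adj x y)
  (Hun : forall x, P x \/ Q x)
  (Hav : forall v, reach_in V adj S x v -> ~ (P v /\ Q v)) :
  P x -> ~ Q x -> forall z, reach_in V adj S x z -> P z /\ ~ Q z.
Proof.
  intros Px Qx z H. induction H as [Sx | y z Hr IH Hyz Sz].
  - auto.
  - destruct IH as [Py Qy].
    assert (Hz : ~ (P z /\ Q z)) by (apply Hav; econstructor 2; eauto).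
    destruct (Hun z) as [Pz|Qz].
    + split; auto.
    + exfalso. apply (Hedge y z); auto.
Qed.

Lemma fin_nbrs (V : Type) (adj : V -> V -> Prop) (Hlf : locally_finite V adj) :
  forall l : list V, exists L, forall y w, In y l -> adj y w -> In w L.
Proof.
  induction l as [|a l IH].
  - exists nil. intros y w [].
  - destruct IH as [L HL]. destruct (Hlf a) as [La HLa].
    exists (La ++ L). intros y w [<-|Hy] Hyw; apply in_or_app.
    + left; apply HLa; auto.
    + right; eapply HL; eauto.
Qed.

Lemma choose_I (V : Type) (As : nat -> vset V)
  (Hm : forall i j, i <= j -> subset (As i) (As j)) (S : vset V) :
  forall L, (forall v, S v -> exists i, As i v) ->
  exists I, forall v, In v L -> S v -> As I v.
Proof.
  induction L as [|a L IH]; intros H.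
  - exists 0. intros v [].
  - destruct (IH H) as [I0 HI0].
    destruct (classic (S a)) as [Sa|Sa].
    + destruct (H a Sa) as [i Hi]. exists (Nat.max I0 i).
      intros v [<-|Hv] Sv.
      * apply (Hm i); [lia|auto].
      * apply (Hm I0); [lia|auto].
    + exists I0. intros v [<-|Hv] Sv; [contradiction|auto].
Qed.

Theorem mainTheorem10 (V : Type) (adj : V -> V -> Prop)
  (Hsimple : simple_graph V adj)
  (Hconn : connected_graph V adj)
  (Hlf : locally_finite V adj)
  (As Bs : nat -> vset V)
  (Hsep : forall i, is_separation V adj (As i) (Bs i))
  (Htight : forall i, tight_sep V adj (As i) (Bs i))
  (Hincr : forall i j, i < j -> sep_lt V (As i) (Bs i) (As j) (Bs j))
  (C D : vset V)
  (HCD : is_separation V adj C D)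
  (HCDfin : sep_order_finite V C D) :
  let A := fun x => exists i, As i x in
  let B := fun x => forall i, Bs i x in
  (exists x, B x) ->
  sep_le V C D A B ->
  exists I, forall i, I <= i -> sep_le V C D (As i) (Bs i).
Proof.
  intros A B [b Hb] [HCA HDB].
  destruct Hsimple as [Hsym _].
  assert (Hmono : forall i j, i <= j -> subset (As i) (As j) /\ subset (Bs j) (Bs i)).
  { intros i j Hij. destruct (Nat.eq_dec i j) as [<-|Hne].
    - split; intros x; auto.
    - destruct (Hincr i j ltac:(lia)) as [[H1 H2] _]. split; auto. }
  destruct HCDfin as [l Hl].
  destruct (fin_nbrs V adj Hlf l) as [L HL].
  set (S := fun v => C v /\ (D v \/ exists y, C y /\ D y /\ adj y v)).
  assert (HSfin : forall v, S v -> In v (l ++ L)).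
  { intros v [Cv [Dv | [y [Cy [Dy Hyv]]]]]; apply in_or_app.
    - left; apply Hl; auto.
    - right; eapply HL; eauto. }
  assert (HSA : forall v, S v -> exists i, As i v).
  { intros v [Cv _]. apply (HCA v Cv). }
  destruct (choose_I V As (fun i j H => proj1 (Hmono i j H)) S (l ++ L) HSA) as [I HI].
  assert (HIS : forall v, S v -> As I v) by (intros v Sv; apply HI; auto).
  destruct HCD as [HCun HCedge].
  assert (HDedge : forall x y, D x -> ~ C x -> C y -> ~ D y -> ~ adj x y).
  { intros x y Dx Cx Cy Dy Hxy. apply (HCedge y x); auto. }
  assert (HDun : forall x, D x \/ C x) by (intros x; destruct (HCun x); auto).
  assert (HY : forall v, C v -> D v -> As I v) by (intros v Cv Dv; apply HIS; split; auto).
  assert (HYn : forall y u, C y -> D y -> adj y u -> C u -> As I u).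
  { intros y u Cy Dy Hyu Cu; apply HIS; split; auto. right; eauto. }
  assert (Claim : sep_le V C D (As I) (Bs I)).
  { destruct (Hsep I) as [HAun HAedge].
    destruct (Htight I) as [_ [K [[[v0 [Hv0 HK]] HN] HKsub]]].
    cbv zeta in *.
    assert (HKY : forall z, K z -> ~ (C z /\ D z)).
    { intros z Kz [Cz Dz]. destruct (HKsub z Kz) as [_ HA]. apply HA; auto. }
    assert (Kv0 : K v0) by (apply HK; constructor; auto).
    assert (HKr : forall v, reach_in V adj (fun y => ~ (As I y /\ Bs I y)) v0 v -> K v)
      by (intros v Hv; apply HK; auto).
    destruct (classic (C v0 /\ ~ D v0)) as [Hc | Hc].
    - exfalso.
      assert (KC : forall z, K z -> C z /\ ~ D z).
      { intros z Kz. apply HK in Kz.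
        apply (side_lemma V adj C D (fun y => ~ (As I y /\ Bs I y)) v0 HCedge HCun); try tauto.
        intros v Hv; apply HKY, HKr; auto. }
      assert (XC : forall x, As I x -> Bs I x -> C x).
      { intros x Ax Bx. assert (Hn : nbhd V adj K x) by (apply HN; auto).
        destruct Hn as [_ [u [Ku Hux]]]. destruct (KC u Ku) as [Cu Du].
        destruct (classic (C x)) as [|Cx]; auto. exfalso.
        destruct (HCun x) as [|Dx]; [contradiction|].
        apply (HCedge u x); auto. }
      assert (Hpath : forall z, reach_in V adj (fun _ => True) b z ->
        (~ C z /\ Bs I z /\ ~ As I z) \/ (exists y, C y /\ D y /\ Bs I y)).
      { intros z Hz. induction Hz as [_ | y z Hr IH Hyz _].
        - destruct (classic (C b)) as [Cb|Cb].
          + right. exists b. split; [auto|split; [apply HDB; auto| apply Hb]].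
          + left. split; [auto|split; [apply Hb|]].
            intro Ab. apply Cb, XC; auto.
        - destruct IH as [[Cy [By Ay]] | Hex]; [|right; auto].
          assert (Dy : D y) by (destruct (HCun y); tauto).
          destruct (classic (C z)) as [Cz|Cz].
          + right. exists z.
            assert (Dz : D z).
            { destruct (classic (D z)) as [|Dz]; auto. exfalso.
              apply (HCedge z y); auto. }
            split; [auto|split; [auto|]].
            destruct (classic (Bs I z)) as [|Bz]; auto. exfalso.
            destruct (HAun z) as [Az|]; [|contradiction].
            apply (HAedge z y); auto.
          + left. split; [auto|].
            assert (Az : ~ As I z).
            { intro Az. destruct (classic (Bs I z)) as [Bz|Bz].
              - apply Cz, XC; auto.
              - apply (HAedge z y); auto. }
            split; [destruct (HAun z); tauto | auto]. }
      destruct (Hpath v0 (Hconn b v0)) as [[Cv _] | [y [Cy [Dy By]]]]; [tauto|].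
      assert (Ay : As I y) by auto.
      assert (Hn : nbhd V adj K y) by (apply HN; auto).
      destruct Hn as [_ [u [Ku Huy]]]. destruct (KC u Ku) as [Cu Du].
      assert (Au : As I u) by (apply (HYn y u); auto).
      destruct (HKsub u Ku) as [_ HnA]. auto.
    - assert (Cv0 : ~ C v0) by (intro Cv; destruct (HCun v0); [|]; apply (HKY v0 Kv0); tauto || (apply Hc; split; auto)).
      assert (Dv0 : D v0) by (destruct (HCun v0); tauto).
      assert (KD : forall z, K z -> D z /\ ~ C z).
      { intros z Kz. apply HK in Kz.
        apply (side_lemma V adj D C (fun y => ~ (As I y /\ Bs I y)) v0 HDedge HDun); try tauto.
        intros v Hv [Dv Cv]. apply (HKY v); auto. }
      assert (XD : forall x, As I x -> Bs I x -> D x).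
      { intros x Ax Bx. assert (Hn : nbhd V adj K x) by (apply HN; auto).
        destruct Hn as [_ [u [Ku Hux]]]. destruct (KD u Ku) as [Du Cu].
        destruct (classic (D x)) as [|Dx]; auto. exfalso.
        destruct (HCun x) as [Cx|]; [|contradiction].
        apply (HDedge u x); auto. }
      assert (CA : forall x, C x -> As I x).
      { intros x Cx. destruct (classic (D x)) as [Dx|Dx]; [auto|].
        apply NNPP. intro Ax.
        assert (Hinv : forall z, reach_in V adj (fun _ => True) x z ->
                  C z /\ ~ D z /\ ~ As I z).
        { intros z Hz. induction Hz as [_ | y z Hr IH Hyz _]; [auto|].
          destruct IH as [Cy [Dy Ay]].
          assert (By : Bs I y) by (destruct (HAun y); tauto).
          assert (Dz : ~ D z).
          { intro Dz. destruct (classic (C z)) as [Cz|Cz].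
            - apply Ay, (HYn z y); auto.
            - apply (HCedge y z); auto. }
          assert (Cz : C z) by (destruct (HCun z); tauto).
          split; [auto|split; [auto|]].
          intro Az. destruct (classic (Bs I z)) as [Bz|Bz].
          - apply Dz, XD; auto.
          - apply (HAedge z y); auto. }
        destruct (Hinv b (Hconn x b)) as [_ [Db _]]. apply Db, HDB; auto. }
      split.
      + intros x Cx; auto.
      + intros x Bx. destruct (classic (D x)) as [|Dx]; auto. exfalso.
        assert (Cx : C x) by (destruct (HCun x); tauto).
        apply Dx, XD; auto. }
  exists I. intros i Hi. destruct Claim as [H1 H2]. destruct (Hmono I i Hi) as [H3 H4].
  split; intros x Hx; auto.
Qed.
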